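(* Let $\varepsilon>0$, $\delta\in(0,1)$, $\Delta>0$, and let $v$ be a real-valued function on datasets with sensitivity $\Delta$, i.e. $|v(D)-v(D')|\le\Delta$ for all neighboring datasets $D,D'$. Let $q_\delta$ denote the absolute value of the $\delta$-quantile of the Laplace distribution $\mathrm{Lap}(\Delta/\varepsilon)$, and set $\tau:=\Delta+q_\delta$. Consider the PositiveLaplaceMechanism which, on dataset $D$, samples $\eta\sim\mathrm{Lap}(\Delta/\varepsilon)$, sets $\tilde v:=v(D)+\tau+\eta$, and outputs $\max(v(D),\tilde v)$. Then this mechanism is $(\varepsilon,\delta)$-differentially private.
   Context: $\mathrm{Lap}(b)$ is the Laplace distribution with mean $0$ and scale $b$, density $\frac{1}{2b}e^{-|x|/b}$. The $\phi$-quantile of a distribution is the value $x$ with $\Pr[X\le x]=\phi$. Two datasets are neighboring if they differ by replacing the contribution of one individual. A randomized algorithm $M$ is $(\varepsilon,\delta)$-differentially private if for every pair of neighboring datasets $D,D'$ and every measurable set $S$, $\Pr[M(D)\in S]\le e^{\varepsilon}\Pr[M(D')\in S]+\delta$ and symmetrically with $D,D'$ swapped. *)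

(* Defs.v *)
From HB Require Import structures.
From mathcomp Require Import all_boot all_order all_algebra.
From mathcomp Require Import all_classical all_reals all_analysis.
Set Implicit Arguments. Unset Strict Implicit. Unset Printing Implicit Defensive.
Import Order.TTheory GRing.Theory Num.Theory.
Import numFieldNormedType.Exports.
Local Open Scope classical_set_scope.
Local Open Scope ring_scope.

Definition laplace_pdf (R : realType) (b : R) (x : R) : R :=
  (2 * b)^-1 * expR (- (`|x| / b)).

Definition laplace_prob (R : realType) (b : R) (A : set R) : \bar R :=
  (\int[@lebesgue_measure R]_(x in A) (laplace_pdf b x)%:E)%E.

Definition plm_output (R : realType) (vD tau eta : R) : R :=
  Num.max vD (vD + tau + eta).

Definition plm_prob (R : realType) (b vD tau : R) (S : set R) : \bar R :=
  laplace_prob b (plm_output vD tau @^-1` S).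

Definition differentially_private (R : realType) (Dset : Type)
  (nb : Dset -> Dset -> Prop) (P : Dset -> set R -> \bar R) (eps delta : R) : Prop :=
  forall D D', nb D D' -> forall S : set R, measurable S ->
    (P D S <= (expR eps)%:E * P D' S + delta%:E)%E /\
    (P D' S <= (expR eps)%:E * P D S + delta%:E)%E.

(* Main.v *)
Require Import Defs.
From HB Require Import structures.
From mathcomp Require Import all_boot all_order all_algebra.
From mathcomp Require Import all_classical all_reals all_analysis measurable_realfun.
From mathcomp Require Import lra ring.
Import Order.TTheory GRing.Theory Num.Theory.
Import numFieldNormedType.Exports.
Local Open Scope classical_set_scope.
Local Open Scope ring_scope.
Lemma mshift (R : realType) (c : R) : measurable_fun setT ((fun x => x + c) : measurableTypeR R -> measurableTypeR R).
Proof. apply: continuous_measurable_fun => x; apply: continuousD => //; exact: cvg_cst. Qed.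

Lemma lebesgue_measure_shift (R : realType) (c : R) (A : set R) : measurable A ->
  pushforward lebesgue_measure ((fun x => x + c) : _ -> measurableTypeR R) A = lebesgue_measure A.
Proof.
move=> mA; apply/esym.
apply: (lebesgue_measure_unique (mu := pushforward lebesgue_measure ((fun x => x + c) : _ -> measurableTypeR R))) => //.

  exact: mshift.
move=> H X [[a b] _ <-].
change (lebesgue_measure `]a, b] = lebesgue_measure ((fun x => x + c) @^-1` `]a, b])%classic).
have -> : ((fun x => x + c) @^-1` `]a, b]) = `](a - c), (b - c)]%classic.
  by apply/seteqP; split => x /=; rewrite !in_itv /= ltrBlDr lerBrDr.
rewrite !lebesgue_measure_itv /= !lte_fin ltrD2r.
case: ifP => // _; congr (_%:E); rewrite /=; lra.
Qed.

Lemma integral_shift (R : realType) (c : R) (A : set R) (f : R -> \bar R) :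
  measurable A -> measurable_fun A f -> (forall x, A x -> (0 <= f x)%E) ->
  (\int[lebesgue_measure]_(x in A) f x =
   \int[lebesgue_measure]_(x in (fun x : R => (x + c)%R) @^-1` A) f (x + c)%R)%E.
Proof.
move=> mA mf f0.
rewrite -(ge0_integral_pushforward (@mshift R c) lebesgue_measure mA mf); last first.
  by move=> x /[!inE]; apply: f0.
apply: eq_measure_integral; first exact: (@mshift R c).
move=> H B mB _.
exact/esym/lebesgue_measure_shift.
Qed.

Lemma pdf_shift (R : realType) (eps Delta d x : R) : 0 < eps -> 0 < Delta ->
  `|d| <= Delta ->
  laplace_pdf (Delta / eps) (x + d) <= expR eps * laplace_pdf (Delta / eps) x.
Proof.
move=> e0 D0 dD; rewrite /laplace_pdf.
set b := Delta / eps.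
have b0 : 0 < b by rewrite divr_gt0.
rewrite [in X in _ <= X]mulrCA ler_pM2l; last by rewrite invr_gt0 mulr_gt0.
rewrite -expRD ler_expR.
have h1 : `|x| - `|x + d| <= Delta.
  have := ler_normD (x + d) (- d); rewrite addrK normrN; lra.
have h2 : (`|x| - `|x + d|) / b <= eps.
  by rewrite ler_pdivrMr // /b mulrC divfK // gt_eqF.
move: h2; rewrite mulrBl; lra.
Qed.

Lemma mpre (R : realType) (f : R -> R) (S : set R) :
  measurable_fun setT f -> measurable S -> measurable (f @^-1` S).
Proof. by move=> mf mS; rewrite -(setTI (f @^-1` S)); exact: mf. Qed.

Lemma one_dir (R : realType) (eps delta Delta xq u u' : R) (S : set R) :
  0 < eps -> 0 < Delta -> `|u - u'| <= Delta ->
  laplace_prob (Delta / eps) [set x | x <= xq] = delta%:E -> measurable S ->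
  (plm_prob (Delta / eps) u (Delta + `|xq|) S <=
   (expR eps)%:E * plm_prob (Delta / eps) u' (Delta + `|xq|) S + delta%:E)%E.
Proof.
move=> e0 D0 uu' hq mS.
set b := Delta / eps; set tau := Delta + `|xq|.
have b0 : 0 < b by rewrite divr_gt0.
pose g := fun x => (laplace_pdf b x)%:E.
have g0 : forall x, (0 <= g x)%E.
  move=> x; rewrite /g lee_fin /laplace_pdf; apply: mulr_ge0; last exact: expR_ge0.
  by rewrite invr_ge0 mulr_ge0 // ltW.
have mg : measurable_fun setT g.
  apply/measurable_EFinP.
  have -> : laplace_pdf b = (fun _ => (2 * b)^-1) \* (expR \o (fun x => `|x| * (- b^-1))).
    by apply/funext => x; rewrite /laplace_pdf /= mulrN.
  apply: measurable_funM; first exact: measurable_cst.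
  apply: measurableT_comp; first exact: measurable_expR.
  apply: measurable_funM; first exact: normr_measurable.
  exact: measurable_cst.
have mgS (B : set R) : measurable_fun B g by exact: measurable_funS mg.
pose P (A : set R) := (\int[lebesgue_measure]_(x in A) g x)%E.
have Pmono (A B : set R) : measurable A -> measurable B -> A `<=` B -> (P A <= P B)%E.
  move=> mA mB AB; apply: ge0_subset_integral => //.
  - exact: measurable_funS mg.
pose A := plm_output u tau @^-1` S.
pose A' := plm_output u' tau @^-1` S.
have mplm (w : R) : measurable_fun setT (plm_output w tau).
  have -> : plm_output w tau = (fun _ => w) \max (fun x => (w + tau) + x).
    by apply/funext => x; rewrite /plm_output.
  apply: measurable_maxr; first exact: measurable_cst.
  apply: measurable_funD; first exact: measurable_cst.
  exact: measurable_id.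
have mA : measurable A by apply: mpre.
have mA' : measurable A' by apply: mpre.
pose m := Num.max u u'.
pose T := S `&` [set y | m <= y].
have mT : measurable T.
  apply: measurableI => //.
  have -> : [set y | m <= y] = `[m, +oo[%classic.
    by apply/seteqP; split => y /=; rewrite in_itv /= andbT.
  exact: measurable_itv.
pose A1 := (fun x => x + (u + tau)) @^-1` T.
pose A1' := (fun x => x + (u' + tau)) @^-1` T.
have mA1 : measurable A1 by apply: mpre => //; exact: mshift.
have mA1' : measurable A1' by apply: mpre => //; exact: mshift.
pose L := `]-oo, - `|xq|[%classic.
have mL : measurable L by exact: measurable_itv.
pose Q := [set x : R | x <= xq].
have mQ : measurable Q.
  have -> : Q = `]-oo, xq]%classic.
    by apply/seteqP; split => y /=; rewrite in_itv /=.
  exact: measurable_itv.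
have PQ : P Q = delta%:E by [].
have P0 (B : set R) : (0 <= P B)%E by apply: integral_ge0 => x _; exact: g0.
have mu_le : m - u <= Delta.
  rewrite /m; have := ler_norm (u' - u); rewrite distrC.
  case: (leP u u') => _; lra.
have sub1 : A `<=` A1 `|` L.
  move=> x; rewrite /A /A1 /L /T /plm_output /= in_itv /=.
  have [h|h] := leP m (x + (u + tau)).
    move=> hS; left; split => //.
    have E : Num.max u (u + tau + x) = x + (u + tau).
      rewrite [RHS]addrC; apply/max_idPr; rewrite /m in h; move: h.
      rewrite ge_max => /andP[h1 _]; lra.
    by rewrite -E.
  move=> _; right; move: h; rewrite /tau; lra.
have sub2 : A1' `<=` A'.
  move=> x; rewrite /A' /A1' /T /plm_output /= => -[hS h].
  have E : Num.max u' (u' + tau + x) = x + (u' + tau).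
    rewrite [RHS]addrC; apply/max_idPr; rewrite /m in h; move: h.
    rewrite ge_max => /andP[_ h2]; lra.
  by rewrite E.
have hL : (P L <= delta%:E)%E.
  rewrite -PQ; apply: Pmono => // x; rewrite /L /Q /= in_itv /=.
  have := ler_norm (- xq); rewrite normrN; lra.
have hU : (P (A1 `|` L) <= P A1 + P L)%E.
  have -> : A1 `|` L = A1 `|` (L `\` A1).
    apply/seteqP; split => x /=.
      by case=> h; [left | case: (pselect (A1 x)) => h'; [left | right]].
    by case=> [h|[h _]]; [left|right].
  rewrite /P (ge0_integral_setU lebesgue_measure mA1 (measurableD mL mA1) (mgS _) (fun x _ => g0 x)); last first.
    by rewrite /disj_set setDIK.
  apply: leeD => //; apply: Pmono => //; first exact: measurableD.
have hS : (P A1 <= (expR eps)%:E * P A1')%E.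
  rewrite /P (@integral_shift R (u' - u) _ _ mA1 (measurable_funS _ _ mg)) //.
  have -> : (fun x => x + (u' - u)) @^-1` A1 = A1'.
    apply/seteqP; split => x; rewrite /A1 /A1' /=;
      by rewrite (_ : x + (u' - u) + (u + tau) = x + (u' + tau)) //; ring.
  rewrite -(ge0_integralZl_EFin lebesgue_measure mA1' (fun x _ => g0 x) (mgS _) (expR_ge0 eps)).
  apply: (ge0_le_integral lebesgue_measure mA1' (fun x _ => g0 _)).
  - apply: (measurable_funS measurableT (@subsetT _ _)).
    exact: (measurableT_comp mg (@mshift R (u' - u))).
  - apply: measurable_funeM; exact: mgS.
  move=> x _; rewrite /g lee_fin; apply: pdf_shift => //.
  by rewrite distrC.
change (P A <= (expR eps)%:E * P A' + delta%:E)%E.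
apply: (le_trans (Pmono _ _ mA (measurableU _ _ mA1 mL) sub1)).
apply: (le_trans hU); apply: leeD => //.
apply: (le_trans hS); apply: lee_pmul.
- by rewrite lee_fin expR_ge0.
- exact: P0.
- by [].
- exact: Pmono.
Qed.

Theorem theoremD1 (R : realType) (Dset : Type) (nb : Dset -> Dset -> Prop)
  (v : Dset -> R) (eps delta Delta xq : R) :
  0 < eps -> 0 < delta < 1 -> 0 < Delta ->
  (forall D D', nb D D' -> `|v D - v D'| <= Delta) ->
  (* xq is the delta-quantile of Lap(Delta/eps); q_delta = |xq| *)
  laplace_prob (Delta / eps) [set x | x <= xq] = delta%:E ->
  differentially_private nb
    (fun D => plm_prob (Delta / eps) (v D) (Delta + `|xq|)) eps delta.
Proof.
move=> e0 _ D0 hv hq D D' nDD' S mS; split.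
- exact: (@one_dir R _ _ _ _ _ _ S e0 D0 (hv _ _ nDD') hq mS).
- by apply: (@one_dir R _ _ _ _ _ _ S e0 D0 _ hq mS); rewrite distrC; exact: hv.
Qed.
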